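(* Let $\mathrm{Jac}_{\bf f}(x)$ denote the $n\times m$ Jacobian matrix of ${\bf f}$ at $x$ (entry $(i,j)$ is $\partial f_j/\partial x_i$). Then $$\mathcal{R}^{lin}_{\bf f}=\bigcup_{x\in V_{\bf f}}\Big(\tfrac12\,\mathrm{Jac}_{\bf f}(x)\cdot \mathrm{S}^{lin}_{\bf f}\Big)\qquad\text{and}\qquad \mathcal{R}^{ed}_{\bf f}=\bigcup_{x\in V_{\bf f}}\Big(x-\tfrac12\,\mathrm{Jac}_{\bf f}(x)\cdot\mathrm{S}^{ed}_{\bf f}\Big),$$ and both unions are disjoint.
   Context: Let ${\bf f}=(f_1,\dots,f_m)$ with $f_i(x)=x^TA_ix+2a_i^Tx+\alpha_i$, $A_i$ real symmetric $n\times n$, $a_i\in\mathbb{R}^n$, $\alpha_i\in\mathbb{R}$, and $V_{\bf f}=\{x\in\mathbb{R}^n: f_1(x)=\dots=f_m(x)=0\}$. For $(C,c)\in\mathcal{S}^n\times\mathbb{R}^n$, write $H(\lambda)=C-\sum_i\lambda_iA_i$; the SDP-exact region $\mathcal{R}_{\bf f}$ is the set of $(C,c)$ (identified with $\begin{bmatrix}0&c^T\\c&C\end{bmatrix}$) for which there are $x\in V_{\bf f}$, $\lambda\in\mathbb{R}^m$ with $H(\lambda)\succ0$ and $c-\sum_i\lambda_ia_i+H(\lambda)x=0$. Define $\mathcal{R}^{lin}_{\bf f}=\{u\in\mathbb{R}^n:(C,c)=(0,u)\in\mathcal{R}_{\bf f}\}$ (SDP-exact region for minimizing $u^Tx$ on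 $V_{\bf f}$) and $\mathcal{R}^{ed}_{\bf f}=\{u\in\mathbb{R}^n:(C,c)=(I_n,-u)\in\mathcal{R}_{\bf f}\}$ (SDP-exact region for minimizing $\|x-u\|^2$ on $V_{\bf f}$). The master spectrahedra are $\mathrm{S}^{lin}_{\bf f}=\{\lambda\in\mathbb{R}^m:\sum_i\lambda_iA_i\prec0\}$ and $\mathrm{S}^{ed}_{\bf f}=\{\lambda\in\mathbb{R}^m:\sum_i\lambda_iA_i\prec I_n\}$. *)

(* Defs.v *)
From HB Require Import structures.
From mathcomp Require Import all_boot all_order all_algebra.
From mathcomp Require Import reals.
Set Implicit Arguments. Unset Strict Implicit. Unset Printing Implicit Defensive.
Import Order.TTheory GRing.Theory Num.Theory.
Local Open Scope ring_scope.

Section QCQP.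
Variables (R : realType) (n m : nat).
Variables (A : 'I_m -> 'M[R]_n) (a : 'I_m -> 'cV[R]_n) (alpha : 'I_m -> R).

Definition qf (i : 'I_m) (x : 'cV[R]_n) : R :=
  (x^T *m A i *m x) 0 0 + 2 * ((a i)^T *m x) 0 0 + alpha i.

Definition Vf (x : 'cV[R]_n) : Prop := forall i, qf i x = 0.

Definition posdef (M : 'M[R]_n) : Prop :=
  forall v : 'cV[R]_n, v != 0 -> 0 < (v^T *m M *m v) 0 0.

Definition sumA (l : 'cV[R]_m) : 'M[R]_n := \sum_(i < m) l i 0 *: A i.

Definition Hmat (C : 'M[R]_n) (l : 'cV[R]_m) : 'M[R]_n := C - sumA l.

Definition Rf (C : 'M[R]_n) (c : 'cV[R]_n) : Prop :=
  exists x : 'cV[R]_n, exists l : 'cV[R]_m,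
    Vf x /\ posdef (Hmat C l) /\
    c - (\sum_(i < m) l i 0 *: a i) + Hmat C l *m x = 0.

Definition Rlin (u : 'cV[R]_n) : Prop := Rf 0 u.
Definition Red (u : 'cV[R]_n) : Prop := Rf 1%:M (- u).

Definition Slin (l : 'cV[R]_m) : Prop := posdef (- sumA l).
Definition Sed (l : 'cV[R]_m) : Prop := posdef (1%:M - sumA l).

(* Jacobian: entry (i,j) = d f_j / d x_i = 2 (A_j x + a_j)_i *)
Definition Jac (x : 'cV[R]_n) : 'M[R]_(n, m) :=
  \matrix_(i < n, j < m) (2 * (A j *m x + a j) i 0).

Definition lin_piece (x : 'cV[R]_n) (u : 'cV[R]_n) : Prop :=
  exists2 l : 'cV[R]_m, Slin l & u = 2^-1 *: (Jac x *m l).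
Definition ed_piece (x : 'cV[R]_n) (u : 'cV[R]_n) : Prop :=
  exists2 l : 'cV[R]_m, Sed l & u = x - 2^-1 *: (Jac x *m l).

End QCQP.

(* Main.v *)
Require Import Defs.
From HB Require Import structures.
From mathcomp Require Import all_boot all_order all_algebra.
From mathcomp Require Import reals.
From mathcomp Require Import ring lra.
Import Order.TTheory GRing.Theory Num.Theory.
Local Open Scope ring_scope.

Lemma mx11_tr (R : nzRingType) (M : 'M[R]_1) : M^T = M.
Proof. by apply/matrixP => i j; rewrite !ord1 mxE. Qed.

Lemma mx11_eq0 (R : nzRingType) (M : 'M[R]_1) : M 0 0 = 0 -> M = 0.
Proof. by move=> h; apply/matrixP => i j; rewrite !ord1 h mxE. Qed.

Lemma Vf_comb (R : realType) n m A a alpha (l : 'cV[R]_m) (z : 'cV[R]_n) :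
  Vf A a alpha z ->
  z^T *m sumA A l *m z + (2:R) *: ((\sum_i l i 0 *: a i)^T *m z)
   + (\sum_i l i 0 * alpha i)%:M = 0.
Proof.
move=> hz; apply: mx11_eq0.
have h: \sum_i l i 0 * qf A a alpha i z = 0 by rewrite big1 // => i _; rewrite hz mulr0.
rewrite -[RHS]h /qf /sumA mulmx_sumr mulmx_suml raddf_sum mulmx_suml.
rewrite !mxE !summxE eqxx mulr1n mulr_sumr -!big_split /=; apply: eq_bigr => i _.
rewrite -!scalemxAr -scalemxAl linearZ /= -scalemxAl !mxE.
ring.
Qed.

Lemma quad_id (R : realType) n (H : 'M[R]_n) (w x z : 'cV[R]_n) :
  H^T = H -> H *m x + w = 0 ->
  (z^T *m H *m z + (2:R) *: (w^T *m z)) - (x^T *m H *m x + (2:R) *: (w^T *m x))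
  = (z - x)^T *m H *m (z - x).
Proof.
move=> hs /eqP; rewrite addrC addr_eq0 => /eqP ->.
rewrite !linearN /= trmx_mul hs !mulNmx.
rewrite !linearB /= !mulmxBl.
have -> : z^T *m H *m x = x^T *m H *m z.
  by rewrite -[LHS]mx11_tr !trmx_mul trmxK hs mulmxA.
rewrite -!mulmxA.
move: (z^T *m (H *m z)) (x^T *m (H *m z)) (x^T *m (H *m x)) => P Q S.
apply/matrixP => i j; rewrite !mxE; ring.
Qed.

Lemma Jac_id (R : realType) n m (A : 'I_m -> 'M[R]_n) a (x : 'cV[R]_n) (l : 'cV[R]_m) :
  2^-1 *: (Jac A a x *m l) = sumA A l *m x + \sum_i l i 0 *: a i.
Proof.
rewrite /sumA mulmx_suml; under eq_bigr do rewrite -scalemxAl.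
apply/matrixP => i j; rewrite !ord1 !mxE !summxE mulr_sumr -big_split /=.
apply: eq_bigr => k _; rewrite !mxE.
have h2 : (2:R) != 0 by rewrite pnatr_eq0.
by field.
Qed.

Lemma Hmat_sym (R : realType) n m (A : 'I_m -> 'M[R]_n) (C : 'M[R]_n) l :
  (forall i, (A i)^T = A i) -> C^T = C -> (Hmat A C l)^T = Hmat A C l.
Proof.
move=> As Cs; rewrite /Hmat linearB /= Cs /sumA raddf_sum /=.
by congr (_ - _); apply: eq_bigr => i _; rewrite linearZ /= As.
Qed.

Lemma qdiff (R : realType) n m (A : 'I_m -> 'M[R]_n) a alpha (C : 'M[R]_n) (c : 'cV[R]_n)
  (l : 'cV[R]_m) (z t : 'cV[R]_n) :
  (forall i, (A i)^T = A i) -> C^T = C -> Vf A a alpha z -> Vf A a alpha t ->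
  c - (\sum_i l i 0 *: a i) + Hmat A C l *m t = 0 ->
  (z^T *m C *m z + (2:R) *: (c^T *m z)) - (t^T *m C *m t + (2:R) *: (c^T *m t))
  = (z - t)^T *m Hmat A C l *m (z - t).
Proof.
move=> As Cs hz ht he.
rewrite -(@quad_id _ _ (Hmat A C l) (c - \sum_i l i 0 *: a i) t z (@Hmat_sym _ _ _ A C l As Cs)); last first.
  by rewrite addrC.
have ez := @Vf_comb _ _ _ A a alpha l z hz; have et := @Vf_comb _ _ _ A a alpha l t ht.
rewrite /Hmat !mulmxBr !mulmxBl !linearB /= !mulmxBl.
move/eqP: ez; rewrite -addrA addr_eq0 => /eqP ->.
move/eqP: et; rewrite -addrA addr_eq0 => /eqP ->.
move: (z^T *m C *m z) (t^T *m C *m t) (c^T *m z) (c^T *m t)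
  ((\sum_i l i 0 *: a i)^T *m z) ((\sum_i l i 0 *: a i)^T *m t)
  ((\sum_i l i 0 * alpha i)%:M : 'M[R]_1) => P1 P2 P3 P4 P5 P6 P7.
apply/matrixP => i j; rewrite !mxE; ring.
Qed.

Lemma uniq_gen (R : realType) n m (A : 'I_m -> 'M[R]_n) a alpha (C : 'M[R]_n) (c : 'cV[R]_n)
  (l mu : 'cV[R]_m) (x y : 'cV[R]_n) :
  (forall i, (A i)^T = A i) -> C^T = C -> Vf A a alpha x -> Vf A a alpha y ->
  posdef (Hmat A C l) -> posdef (Hmat A C mu) ->
  c - (\sum_i l i 0 *: a i) + Hmat A C l *m x = 0 ->
  c - (\sum_i mu i 0 *: a i) + Hmat A C mu *m y = 0 -> x = y.
Proof.
move=> As Cs hx hy pl pm el em.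
have d1 := @qdiff _ _ _ A a alpha C c l y x As Cs hy hx el.
have d2 := @qdiff _ _ _ A a alpha C c mu x y As Cs hx hy em.
have hs : ((y - x)^T *m Hmat A C l *m (y - x)) 0 0 + ((x - y)^T *m Hmat A C mu *m (x - y)) 0 0 = 0.
  by rewrite -d1 -d2 !mxE; ring.
apply/eqP; apply: contraT => nxy.
have h1 : y - x != 0 by rewrite subr_eq0 eq_sym.
have h2 : x - y != 0 by rewrite subr_eq0.
have := pl _ h1; have := pm _ h2; move: hs; lra.
Qed.

Theorem theorem4p1 (R : realType) (n m : nat)
  (A : 'I_m -> 'M[R]_n) (a : 'I_m -> 'cV[R]_n) (alpha : 'I_m -> R)
  (Asym : forall i, (A i)^T = A i) :
  (* R^lin = union over x in V_f of (1/2) Jac(x) . S^lin, disjoint *)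
  (forall u : 'cV[R]_n,
      Rlin A a alpha u <-> exists2 x, Vf A a alpha x & lin_piece A a x u) /\
  (forall x y u : 'cV[R]_n, Vf A a alpha x -> Vf A a alpha y ->
      lin_piece A a x u -> lin_piece A a y u -> x = y) /\
  (* R^ed = union over x in V_f of x - (1/2) Jac(x) . S^ed, disjoint *)
  (forall u : 'cV[R]_n,
      Red A a alpha u <-> exists2 x, Vf A a alpha x & ed_piece A a x u) /\
  (forall x y u : 'cV[R]_n, Vf A a alpha x -> Vf A a alpha y ->
      ed_piece A a x u -> ed_piece A a y u -> x = y).
Proof.
have linE : forall (x u : 'cV[R]_n) (l : 'cV[R]_m), (u - (\sum_i l i 0 *: a i) + Hmat A 0 l *m x = 0)
    <-> u = 2^-1 *: (Jac A a x *m l).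
  move=> x u l; rewrite Jac_id /Hmat sub0r mulNmx; split.
    by move/eqP; rewrite -addrA -opprD subr_eq0 addrC => /eqP.
  by move=> ->; rewrite addrK subrr.
have edE : forall (x u : 'cV[R]_n) (l : 'cV[R]_m), (- u - (\sum_i l i 0 *: a i) + Hmat A 1%:M l *m x = 0)
    <-> u = x - 2^-1 *: (Jac A a x *m l).
  move=> x u l; rewrite Jac_id /Hmat mulmxBl mul1mx.
  have e : forall (u b x Sx : 'cV[R]_n), -u - b + (x - Sx) = (x - (Sx + b)) - u.
    by move=> *; apply/matrixP=> i j; rewrite !mxE; ring.
  rewrite e; split => [/eqP|->]; last by rewrite subrr.
  by rewrite subr_eq0 => /eqP.
have s0 : (0 : 'M[R]_n)^T = 0 by rewrite trmx0.
have s1 : (1%:M : 'M[R]_n)^T = 1%:M by rewrite tr_scalar_mx.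
split; [|split; [|split]].
- move=> u; split.
    case=> x [l [hx [hp he]]]; exists x => //; exists l; last by apply/linE.
    by move: hp; rewrite /Hmat sub0r.
  case=> x hx [l hl hu]; exists x, l; split => //; split; last by apply/linE.
  by rewrite /Hmat sub0r.
- move=> x y u hx hy [l hl hu] [mu hm hv].
  apply: (@uniq_gen _ _ _ A a alpha 0 u l mu x y Asym s0 hx hy).
  + by rewrite /Hmat sub0r.
  + by rewrite /Hmat sub0r.
  + by apply/linE.
  + by apply/linE.
- move=> u; split.
    case=> x [l [hx [hp he]]]; exists x => //; exists l => //; by apply/edE.
  case=> x hx [l hl hu]; exists x, l; split => //; split => //; by apply/edE.
- move=> x y u hx hy [l hl hu] [mu hm hv].
  apply: (@uniq_gen _ _ _ A a alpha 1%:M (- u) l mu x y Asym s1 hx hy) => //.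
  + by apply/edE.
  + by apply/edE.
Qed.
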